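(* If a PPT three-mode CM $\gamma$ is fully separable, then $$\mathrm{tr}\,N\ge2,\quad \mathrm{tr}\,\tilde N\ge2,\quad \det N>0,\quad \det\tilde N>0.$$
   Context: Conventions: Three modes $A,B,C$, phase-space vectors ordered mode-wise as $(q_A,p_A,q_B,p_B,q_C,p_C)$. $J_1=\begin{pmatrix}0&-1\\1&0\end{pmatrix}$, $J=J_1\oplus J_1\oplus J_1$. A CM of $n$ modes is a real symmetric $2n\times2n$ matrix $\gamma>0$ with $\gamma-iJ\ge0$. $X\ge Y$ means $X-Y$ is positive semidefinite. For $x\in\{A,B,C\}$, $\tilde J_x$ is $J$ with the $2\times2$ diagonal block of mode $x$ replaced by $-J_1$, and $\tilde J_0=J$. A three-mode CM $\gamma$ is called PPT if $\gamma\ge i\tilde J_x$ for all $x\in\{0,A,B,C\}$, and fully separable if there exist one-mode CMs $\gamma_A,\gamma_B,\gamma_C$ with $\gamma\ge\gamma_A\oplus\gamma_B\oplus\gamma_C$. Write $\gamma=\begin{pmatrix}A&C\\C^T&B\end{pmatrix}$ with $A$ the $2\times2$ block of mode $A$, $B$ the $4\times4$ block of modes $B,C$, $C$ the $2\times4$ off-diagonal block; let $J_{BC}=J_1\oplus J_1$, $\tilde J_{BC}=J_1\oplus(-J_1)$, and define the (Hermitian, possibly complex) $2\times2$ matrices $$N=A-C(B-iJ_{BC})^{-1}C^T,\qquad \tilde N=A-C(B-i\tilde J_{BC})^{-1}C^T,$$ where the inverses are Moore–Penrose pseudoinverses (inversion on the range); these are well defined because $\ker(B-iJ_{BC}),\ker(B-i\tilde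 J_{BC})\subseteq\ker C$ for PPT $\gamma$. *)

(* Defs.v *)
From HB Require Import structures.
From mathcomp Require Import all_boot all_order all_algebra.
From mathcomp Require Import complex.
From Stdlib Require Import ClassicalEpsilon.
Set Implicit Arguments. Unset Strict Implicit. Unset Printing Implicit Defensive.
Import Order.TTheory GRing.Theory Num.Theory.
Local Open Scope ring_scope.

Section Defs.
Variable R : rcfType.
Local Notation C := R[i].

Definition iC : C := Complex 0 1.

Definition cmx {m n} (X : 'M[R]_(m, n)) : 'M[C]_(m, n) := map_mx (real_complex R) X.

Definition adjm {m n} (X : 'M[C]_(m, n)) : 'M[C]_(n, m) := (map_mx (@conjc R) X)^T.

Definition dsum {T : nmodType} {m n} (X : 'M[T]_m) (Y : 'M[T]_n) : 'M[T]_(m + n) :=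
  block_mx X 0 0 Y.

Definition psdR {n} (X : 'M[R]_n) : Prop :=
  forall v : 'cV[R]_n, 0 <= (v^T *m X *m v) 0 0.
Definition pdR {n} (X : 'M[R]_n) : Prop :=
  forall v : 'cV[R]_n, v != 0 -> 0 < (v^T *m X *m v) 0 0.

(* complex (Hermitian) positive semidefinite: v^* X v is real and >= 0 for all v *)
Definition psdC {n} (X : 'M[C]_n) : Prop :=
  forall v : 'cV[C]_n, 0 <= (adjm v *m X *m v) 0 0.

Definition J1 : 'M[R]_2 :=
  \matrix_(i < 2, j < 2)
    (if (val i == 0%N) && (val j == 1%N) then -1
     else if (val i == 1%N) && (val j == 0%N) then 1 else 0).

(* three modes ordered A, B, C : phase space R^(2 + (2 + 2)) *)
Definition J3 : 'M[R]_(2 + (2 + 2)) := dsum J1 (dsum J1 J1).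

Inductive ptx := P0 | PA | PB | PC.

Definition Jt (x : ptx) : 'M[R]_(2 + (2 + 2)) :=
  match x with
  | P0 => J3
  | PA => dsum (- J1) (dsum J1 J1)
  | PB => dsum J1 (dsum (- J1) J1)
  | PC => dsum J1 (dsum J1 (- J1))
  end.

Definition isCM {n} (J : 'M[R]_n) (g : 'M[R]_n) : Prop :=
  g^T = g /\ pdR g /\ psdC (cmx g - iC *: cmx J).

Definition isCM3 (g : 'M[R]_(2 + (2 + 2))) : Prop := isCM J3 g.
Definition isCM1 (g : 'M[R]_2) : Prop := isCM J1 g.

Definition PPT (g : 'M[R]_(2 + (2 + 2))) : Prop :=
  forall x : ptx, psdC (cmx g - iC *: cmx (Jt x)).

Definition fully_separable (g : 'M[R]_(2 + (2 + 2))) : Prop :=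
  exists gA gB gC : 'M[R]_2,
    [/\ isCM1 gA, isCM1 gB, isCM1 gC & psdR (g - dsum gA (dsum gB gC))].

(* Moore--Penrose pseudoinverse: the (unique) P satisfying the Penrose equations *)
Definition penrose {n} (X P : 'M[C]_n) : Prop :=
  [/\ X *m P *m X = X, P *m X *m P = P,
      adjm (X *m P) = X *m P & adjm (P *m X) = P *m X].

Definition mpinv {n} (X : 'M[C]_n) : 'M[C]_n :=
  epsilon (inhabits 0) (fun P => penrose X P).

(* blocks: A (mode A), B (modes B,C), C (off-diagonal) *)
Definition blkA (g : 'M[R]_(2 + (2 + 2))) : 'M[R]_2 := ulsubmx g.
Definition blkB (g : 'M[R]_(2 + (2 + 2))) : 'M[R]_(2 + 2) := drsubmx g.
Definition blkC (g : 'M[R]_(2 + (2 + 2))) : 'M[R]_(2, 2 + 2) := ursubmx g.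

Definition JBC : 'M[R]_(2 + 2) := dsum J1 J1.
Definition JtBC : 'M[R]_(2 + 2) := dsum J1 (- J1).

Definition Nmat (g : 'M[R]_(2 + (2 + 2))) : 'M[C]_2 :=
  cmx (blkA g) - cmx (blkC g) *m mpinv (cmx (blkB g) - iC *: cmx JBC) *m cmx (blkC g)^T.
Definition Ntmat (g : 'M[R]_(2 + (2 + 2))) : 'M[C]_2 :=
  cmx (blkA g) - cmx (blkC g) *m mpinv (cmx (blkB g) - iC *: cmx JtBC) *m cmx (blkC g)^T.

End Defs.

(* Main.v *)
Require Import Defs.
From HB Require Import structures.
From mathcomp Require Import all_boot all_order all_algebra.
From mathcomp Require Import complex.
From mathcomp Require Import ring lra.
From Stdlib Require Import ClassicalEpsilon.
Import Order.TTheory GRing.Theory Num.Theory.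
Local Open Scope ring_scope.
Set Implicit Arguments. Unset Strict Implicit. Unset Printing Implicit Defensive.


Section Adj.
Variable R : rcfType.
Local Notation C := R[i].

Lemma adjmK m n (X : 'M[C]_(m, n)) : adjm (adjm X) = X.
Proof. by apply/matrixP=> i j; rewrite !mxE conjcK. Qed.

Lemma adjm_mul m n p (A : 'M[C]_(m, n)) (B : 'M[C]_(n, p)) :
  adjm (A *m B) = adjm B *m adjm A.
Proof. by rewrite /adjm map_mxM trmx_mul. Qed.

Lemma adjmD m n (A B : 'M[C]_(m, n)) : adjm (A + B) = adjm A + adjm B.
Proof. by apply/matrixP=> i j; rewrite !mxE rmorphD. Qed.

Lemma adjmN m n (A : 'M[C]_(m, n)) : adjm (- A) = - adjm A.
Proof. by apply/matrixP=> i j; rewrite !mxE rmorphN. Qed.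

Lemma adjmZ m n a (A : 'M[C]_(m, n)) : adjm (a *: A) = (conjc a) *: adjm A.
Proof. by apply/matrixP=> i j; rewrite !mxE rmorphM. Qed.

Lemma adjm1 n : adjm (1%:M : 'M[C]_n) = 1%:M.
Proof. by apply/matrixP=> i j; rewrite !mxE conjc_nat eq_sym. Qed.

Lemma adjm0 m n : adjm (0 : 'M[C]_(m,n)) = 0.
Proof. by apply/matrixP=> i j; rewrite !mxE conjc0. Qed.

Lemma cmul_conj_eq0 (x : C) : x * conjc x = 0 -> x = 0.
Proof. by move/eqP; rewrite mulf_eq0 conjc_eq0 orbb => /eqP. Qed.

Lemma mul_adj_eq0 m n (Y : 'M[C]_(m, n)) : Y *m adjm Y = 0 -> Y = 0.
Proof.
move=> H; apply/matrixP=> i j; rewrite mxE.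
have /eqP := congr1 (fun M : 'M[C]_m => M i i) H; rewrite !mxE.
under eq_bigr do rewrite !mxE.
rewrite psumr_eq0; last by move=> k _; exact: mulcJ_ge0.
move/allP => /(_ j (mem_index_enum _)) /implyP /(_ isT) /eqP.
exact: cmul_conj_eq0.
Qed.

Lemma adjm_invmx n (K : 'M[C]_n) : K \in unitmx -> adjm K = K -> adjm (invmx K) = invmx K.
Proof.
move=> uK hK.
have e : adjm (invmx K) *m K = 1%:M by rewrite -{2}hK -adjm_mul mulmxV // adjm1.
by rewrite -(mulmxK uK (adjm (invmx K))) e mul1mx.
Qed.

Lemma free_of_inj m n (A : 'M[C]_(m, n)) :
  (forall (a : 'M[C]_(m, m)), a *m A = 0 -> a = 0) -> row_free A.
Proof. by move=> h; rewrite -kermx_eq0; apply/eqP/h; apply/eqP; rewrite -sub_kermx. Qed.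

Lemma mp_exists n (X : 'M[C]_n) : exists P, penrose X P.
Proof.
have [r [F [G [eX fG fF]]]] : exists r (F : 'M[C]_(n, r)) (G : 'M[C]_(r, n)),
   [/\ F *m G = X, row_free G & row_full F].
  by exists (\rank X), (col_base X), (row_base X); split;
   [exact: mulmx_base | exact: row_base_free | exact: col_base_full].
have fF' : row_free (adjm F).
  by rewrite /row_free /adjm mxrank_tr mxrank_map.
set K1 := adjm F *m F; set K2 := G *m adjm G.
have u1 : K1 \in unitmx.
  rewrite -row_free_unit; apply: free_of_inj => a ha.
  apply/eqP; rewrite -(mulmx_free_eq0 _ fF'); apply/eqP; apply: mul_adj_eq0.
  by rewrite adjm_mul adjmK mulmxA -(mulmxA a) ha mul0mx.
have u2 : K2 \in unitmx.
  rewrite -row_free_unit; apply: free_of_inj => a ha.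
  apply/eqP; rewrite -(mulmx_free_eq0 _ fG); apply/eqP; apply: mul_adj_eq0.
  by rewrite adjm_mul mulmxA -(mulmxA a) ha mul0mx.
have h1 : adjm K1 = K1 by rewrite /K1 adjm_mul adjmK.
have h2 : adjm K2 = K2 by rewrite /K2 adjm_mul adjmK.
exists (adjm G *m invmx K2 *m invmx K1 *m adjm F).
have XP : X *m (adjm G *m invmx K2 *m invmx K1 *m adjm F) = F *m invmx K1 *m adjm F.
  by rewrite -eX !mulmxA -(mulmxA F G) -/K2 -(mulmxA F K2) (mulmxV u2) mulmx1.
have PX : (adjm G *m invmx K2 *m invmx K1 *m adjm F) *m X = adjm G *m invmx K2 *m G.
  by rewrite -eX !mulmxA -(mulmxA _ (adjm F) F) -/K1 -(mulmxA _ (invmx K1) K1) (mulVmx u1) mulmx1.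
split.
- by rewrite XP -eX -!mulmxA (mulmxA (adjm F)) -/K1 (mulmxA (invmx K1)) (mulVmx u1) mul1mx.
- by rewrite PX -!mulmxA (mulmxA G) -/K2 (mulmxA (invmx K2)) (mulVmx u2) mul1mx.
- by rewrite XP !adjm_mul adjmK adjm_invmx // mulmxA.
- by rewrite PX !adjm_mul adjmK adjm_invmx // mulmxA.
Qed.

Lemma mpinvP n (X : 'M[C]_n) : penrose X (mpinv X).
Proof.
rewrite /mpinv; have [P hP] := mp_exists X.
exact: (epsilon_spec (inhabits 0) (fun P => penrose X P) (ex_intro _ P hP)).
Qed.

End Adj.


Section Blk.
Variable R : rcfType.
Local Notation C := R[i].

Lemma adjm_col m1 m2 n (x : 'M[C]_(m1, n)) (y : 'M[C]_(m2, n)) :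
  adjm (col_mx x y) = row_mx (adjm x) (adjm y).
Proof. by rewrite /adjm map_col_mx tr_col_mx. Qed.

Lemma qform_block n1 n2 (P0 : 'M[C]_n1) Q Q2 (S : 'M[C]_n2) k (x : 'M[C]_(n1,k)) (y : 'M[C]_(n2,k)) :
  adjm (col_mx x y) *m block_mx P0 Q Q2 S *m col_mx x y =
  adjm x *m P0 *m x + adjm x *m Q *m y + adjm y *m Q2 *m x + adjm y *m S *m y.
Proof.
rewrite adjm_col mul_row_block mul_row_col !mulmxDl.
by rewrite addrA -(addrA (_ *m x)) (addrC (_ *m Q2 *m x)) !addrA.
Qed.

Lemma adj_self_eq0 n (w : 'cV[C]_n) : (adjm w *m w) 0 0 = 0 -> w = 0.
Proof.
move=> h.
have : adjm w *m adjm (adjm w) = 0.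
  by rewrite adjmK (mx11_scalar (adjm w *m w)) h; apply/matrixP=> i j; rewrite !mxE mul0rn.
by move/mul_adj_eq0 => e; rewrite -(adjmK w) e adjm0.
Qed.

Lemma adj_self_ge0 n (w : 'cV[C]_n) : 0 <= (adjm w *m w) 0 0.
Proof.
rewrite mxE; apply: sumr_ge0 => i _; rewrite !mxE mulrC; exact: mulcJ_ge0.
Qed.

Lemma kernel_lem n1 n2 (P0 : 'M[C]_n1) Q (S : 'M[C]_n2) (y : 'cV[C]_n2) :
  psdC (block_mx P0 Q (adjm Q) S) -> S *m y = 0 -> Q *m y = 0.
Proof.
move=> hP hS; set w := Q *m y.
set p := (adjm w *m P0 *m w) 0 0; set s := (adjm w *m w) 0 0.
have key : forall k : R, 0 <= p - (2 * k)%:C%C * s.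
  move=> k; have := hP (col_mx (- w) (k%:C%C *: y)).
  rewrite qform_block !adjmN !adjmZ conjc_real !mulNmx !mulmxN opprK.
  rewrite -!scalemxAl -!scalemxAr -(mulmxA (adjm y) S) hS mulmx0 !scaler0 addr0.
  rewrite -(mulmxA (adjm w) Q) -/w.
  have -> : adjm y *m adjm Q = adjm w by rewrite /w adjm_mul.
  rewrite /p /s; set PP := adjm w *m P0 *m w; set SS := adjm w *m w.
  rewrite !mxE.
  suff -> : ((2*k)%:C)%C = k%:C%C + k%:C%C by rewrite mulrDl opprD addrA.
  by apply/eqP; rewrite eq_complex /= addr0 eqxx andbT mulr_natl mulr2n.
have hs := adj_self_ge0 w.
have hp : 0 <= p.
  move: (key 0); have -> : ((2*0)%:C)%C = 0 :> C by apply/eqP; rewrite eq_complex /= mulr0 eqxx.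
  by rewrite mul0r subr0.
have es := RRe_real (ger0_real hs); have ep := RRe_real (ger0_real hp).
move: key hs hp es ep; set sr := complex.Re s; set pr := complex.Re p.
move=> key hs hp es ep; rewrite -/s in es; rewrite -es -ep in key hs hp.
have key' : forall k, 0 <= pr - 2 * k * sr.
  by move=> k; move: (key k); simpc.
have hsr : 0 <= sr by move: hs; rewrite -/s -es; simpc.
have hpr : 0 <= pr by move: hp; simpc.
have sr0 : sr = 0.
  apply/eqP; rewrite eq_le hsr andbT; rewrite leNgt; apply/negP => hpos.
  have := key' ((pr + 1) / sr).
  rewrite -mulrA divfK; last by rewrite gt_eqF.
  lra.
apply: adj_self_eq0; rewrite -/s -es sr0; done.
Qed.

Lemma schur n1 n2 (P0 : 'M[C]_n1) Q (S : 'M[C]_n2) :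
  psdC (block_mx P0 Q (adjm Q) S) -> adjm S = S -> psdC (P0 - Q *m mpinv S *m adjm Q).
Proof.
move=> hP hS; set P := mpinv S; have [e1 _ _ _] := mpinvP S; rewrite -/P in e1.
have hQ : Q *m P *m S = Q.
  have : Q *m (1%:M - P *m S) = 0.
    apply/matrixP => i j.
    have := kernel_lem (y := (1%:M - P *m S) *m delta_mx j 0) hP.
    rewrite mulmxA mulmxBr mulmx1 mulmxA e1 subrr mul0mx => /(_ erefl).
    by rewrite mulmxA -colE => /matrixP /(_ i 0); rewrite !mxE.
  by rewrite mulmxBr mulmx1 mulmxA => /eqP; rewrite subr_eq0 => /eqP <-.
move=> x; set z := adjm P *m adjm Q *m x.
have hz : adjm Q *m x = S *m z.
  by rewrite /z -{1}hQ !adjm_mul hS !mulmxA.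
have hz' : adjm x *m Q = adjm z *m S.
  by rewrite -(adjmK Q) -adjm_mul hz adjm_mul hS.
clearbody z.
have := hP (col_mx x (-z)); rewrite qform_block.
rewrite !adjmN !mulNmx !mulmxN opprK hz' -(mulmxA (adjm z) (adjm Q)) hz mulmxA.
suff -> : adjm x *m (P0 - Q *m P *m adjm Q) *m x = adjm x *m P0 *m x - adjm z *m S *m z.
  by rewrite subrK.
rewrite mulmxBr mulmxBl; congr (_ - _).
rewrite !mulmxA hz' -(mulmxA _ (adjm Q) x) hz mulmxA.
by rewrite -(mulmxA (adjm z) S P) -(mulmxA (adjm z) (S *m P) S) e1.
Qed.

End Blk.


Lemma det2 (R : comNzRingType) (A : 'M[R]_2) : \det A = A 0 0 * A 1 1 - A 0 1 * A 1 0.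
Proof.
rewrite (expand_det_row _ 0) !big_ord_recl big_ord0 /cofactor !det_mx11 !mxE /=.
rewrite expr0 mul1r expr1 addr0 mulN1r mulrN.
have e1 : lift 0 0 = 1 :> 'I_2 by apply/val_inj.
have e2 : lift (lift ord0 ord0) 0 = 0 :> 'I_2 by apply/val_inj.
have e3 : lift ord0 ord0 = 1 :> 'I_2 by apply/val_inj.
by rewrite e2 !e3.
Qed.
Lemma tr2 (R : comNzRingType) (A : 'M[R]_2) : \tr A = A 0 0 + A 1 1.
Proof. rewrite /mxtrace !big_ord_recl big_ord0 addr0.
have e3 : lift ord0 ord0 = 1 :> 'I_2 by apply/val_inj.
by rewrite e3. Qed.

Section Fin.
Variable R : rcfType.
Local Notation C := R[i].

Lemma psd2 (X : 'M[C]_2) : psdC X -> forall u v : C,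
  0 <= conjc u * (X 0 0 * u + X 0 1 * v) + conjc v * (X 1 0 * u + X 1 1 * v).
Proof.
move=> h u v; have := h (\col_i (if i == 0 then u else v)).
rewrite !mxE !big_ord_recl !big_ord0 !mxE !big_ord_recl !big_ord0 !mxE /=.
have e3 : lift ord0 ord0 = 1 :> 'I_2 by apply/val_inj.
rewrite !e3 !addr0 => hh.
suff E : conjc u * (X 0 0 * u + X 0 1 * v) + conjc v * (X 1 0 * u + X 1 1 * v) =
  (conjc u * X 0 0 + conjc v * X 1 0) * u + (conjc u * X 0 1 + conjc v * X 1 1) * v.
  by rewrite E.
ring.
Qed.

Lemma fin2 (H : 'M[C]_2) : psdC (H - iC R *: cmx (J1 R)) -> psdC (H + iC R *: cmx (J1 R)) ->
  2 <= \tr H /\ 0 < \det H.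
Proof.
move=> /psd2 p1 /psd2 p2; rewrite !mxE /= in p1 p2.
rewrite tr2 det2; move: p1 p2; rewrite /iC.
move: (H 0 0) (H 0 1) (H 1 0) (H 1 1) => [a1 a2] [b1 b2] [c1 c2] [d1 d2] p1 p2.
have := p1 1 0; simpc => /andP[/eqP q1 q2].
have := p1 0 1; simpc => /andP[/eqP q3 q4].
have := p1 1 1; simpc => /andP[/eqP q5 q6].
have := p1 1 (Complex 0 1); simpc => /andP[/eqP q7 q8].
have := p2 1 (Complex 0 (-1)); simpc => /andP[/eqP q9 q10].
have ea2 : a2 = 0 by lra.
have ed2 : d2 = 0 by lra.
have ec1 : c1 = b1 by lra.
have ec2 : c2 = - b2 by lra.
subst a2 d2 c1 c2.
have ht : 2 <= a1 + d1 by lra.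
have := p1 (Complex d1 0) (- conjc (Complex b1 (b2+1))); simpc => /andP[_ r1].
have := p1 (- Complex b1 (b2+1)) (Complex a1 0); simpc => /andP[_ r2].
have := p2 (Complex d1 0) (- conjc (Complex b1 (b2-1))); simpc => /andP[_ r3].
have := p2 (- Complex b1 (b2-1)) (Complex a1 0); simpc => /andP[_ r4].
have K1 : 0 <= a1 * d1 - b1^2 - (b2+1)^2 by nra.
have K2 : 0 <= a1 * d1 - b1^2 - (b2-1)^2 by nra.
split; apply/andP; split; try (apply/eqP; lra); lra.
Qed.
End Fin.


Section M.
Variable R : rcfType.
Local Notation C := R[i].

Lemma cmxN m n (X : 'M[R]_(m,n)) : cmx (- X) = - cmx X.
Proof. by rewrite /cmx map_mxN. Qed.
Lemma cmxT m n (X : 'M[R]_(m,n)) : cmx X^T = (cmx X)^T.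
Proof. by rewrite /cmx map_trmx. Qed.
Lemma adjm_cmx m n (X : 'M[R]_(m,n)) : adjm (cmx X) = cmx X^T.
Proof. by apply/matrixP=> i j; rewrite !mxE conjc_real. Qed.
Lemma conj_iC : conjc (iC R) = - iC R.
Proof. by apply/eqP; rewrite eq_complex /= oppr0 !eqxx. Qed.
Lemma cmx_dsum m n (X : 'M[R]_m) (Y : 'M[R]_n) : cmx (dsum X Y) = dsum (cmx X) (cmx Y).
Proof. by rewrite /dsum /cmx map_block_mx !map_mx0. Qed.
Lemma cmx_block (g : 'M[R]_(2 + (2 + 2))) :
  cmx g = block_mx (cmx (ulsubmx g)) (cmx (ursubmx g)) (cmx (dlsubmx g)) (cmx (drsubmx g)).
Proof. by rewrite -{1}(submxK g) /cmx map_block_mx. Qed.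

Lemma blk_psd (g : 'M[R]_(2 + (2 + 2))) (J0 : 'M[R]_2) (JB : 'M[R]_(2 + 2)) :
  g^T = g -> JB^T = - JB -> psdC (cmx g - iC R *: cmx (dsum J0 JB)) ->
  psdC (cmx (blkA g) - iC R *: cmx J0 -
        cmx (blkC g) *m mpinv (cmx (blkB g) - iC R *: cmx JB) *m cmx (blkC g)^T).
Proof.
move=> sg aJ h.
have e : cmx g - iC R *: cmx (dsum J0 JB) =
  block_mx (cmx (blkA g) - iC R *: cmx J0) (cmx (blkC g))
           (adjm (cmx (blkC g))) (cmx (blkB g) - iC R *: cmx JB).
  rewrite cmx_block cmx_dsum /dsum scale_block_mx !scaler0 opp_block_mx !oppr0 add_block_mx.
  by rewrite !addr0 adjm_cmx /blkC trmx_ursub sg.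
rewrite e in h; rewrite -adjm_cmx.
apply: schur => //.
rewrite adjmD adjmN adjmZ conj_iC !adjm_cmx trmx_drsub sg aJ cmxN.
by rewrite scaleNr scalerN opprK.
Qed.

End M.


Section MM.
Variable R : rcfType.
Local Notation C := R[i].

Lemma J1T : (J1 R)^T = - J1 R.
Proof.
apply/matrixP=> i j; rewrite !mxE.
case: i => [[|[|i]] hi] //; case: j => [[|[|j]] hj] //=; by rewrite ?oppr0 ?opprK.
Qed.

Lemma dsumT m n (X : 'M[R]_m) (Y : 'M[R]_n) : (dsum X Y)^T = dsum X^T Y^T.
Proof. by rewrite /dsum tr_block_mx !trmx0. Qed.
Lemma dsumN m n (X : 'M[R]_m) (Y : 'M[R]_n) : - dsum X Y = dsum (- X) (- Y).
Proof. by rewrite /dsum opp_block_mx !oppr0. Qed.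

Lemma JBCT : (JBC R)^T = - JBC R.
Proof. by rewrite /JBC dsumT J1T dsumN. Qed.
Lemma JtBCT : (JtBC R)^T = - JtBC R.
Proof. by rewrite /JtBC dsumT linearN /= J1T dsumN. Qed.

Lemma psd_conj n (X : 'M[C]_n) : psdC X -> psdC (map_mx (@conjc R) X).
Proof.
move=> h v; have := h (map_mx (@conjc R) v).
rewrite -conj_ge0.
suff -> : conjc ((adjm (map_mx (@conjc R) v) *m X *m map_mx (@conjc R) v) 0 0) =
          (adjm v *m map_mx (@conjc R) X *m v) 0 0 by [].
set M := adjm _ *m _ *m _.
have -> : conjc (M 0 0) = (map_mx (@conjc R) M) 0 0 by rewrite [RHS]mxE.
rewrite /M !map_mxM.
apply: (congr1 (fun M : 'M[C]_1 => M 0 0)); congr (_ *m _ *m _).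
- by apply/matrixP=> i j; rewrite !mxE ?conjcK.
- by apply/matrixP=> i j; rewrite !mxE; exact: conjcK.
Qed.

Theorem main (g : 'M[R]_(2 + (2 + 2))) :
  isCM3 g -> PPT g -> fully_separable g ->
  [/\ 2 <= \tr (Nmat g), 2 <= \tr (Ntmat g), 0 < \det (Nmat g) & 0 < \det (Ntmat g)].
Proof.
move=> [sg [_ hg]] hP _.
have hN1 : psdC (Nmat g - iC R *: cmx (J1 R)).
  by have := blk_psd (J0 := J1 R) (JB := JBC R) sg JBCT hg; rewrite /Nmat addrAC.
have hN2 : psdC (Nmat g + iC R *: cmx (J1 R)).
  have := blk_psd (J0 := - J1 R) (JB := JBC R) sg JBCT (hP PA).
  by rewrite /Nmat cmxN scalerN opprK addrAC.
have hT1 : psdC (Ntmat g - iC R *: cmx (J1 R)).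
  by have := blk_psd (J0 := J1 R) (JB := JtBC R) sg JtBCT (hP PC); rewrite /Ntmat addrAC.
have hT2 : psdC (Ntmat g + iC R *: cmx (J1 R)).
  have h := psd_conj (hP PB).
  have e : map_mx (@conjc R) (cmx g - iC R *: cmx (Jt R PB)) =
           cmx g - iC R *: cmx (dsum (- J1 R) (JtBC R)).
    rewrite map_mxB map_mxZ /=.
    have -> : Complex 0 (-1) = - iC R :> C by apply/eqP; rewrite eq_complex /= oppr0 !eqxx.
    have cc : forall m n (X : 'M[R]_(m,n)), map_mx (@conjc R) (cmx X) = cmx X.
      by move=> m n X; apply/matrixP=> i j; rewrite !mxE conjc_real.
    have eJ : dsum (- J1 R) (dsum (J1 R) (- J1 R)) = - dsum (J1 R) (dsum (- J1 R) (J1 R)).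
      by rewrite !dsumN opprK.
    by rewrite !cc /JtBC eJ cmxN scalerN scaleNr.
  rewrite e in h.
  have := blk_psd (J0 := - J1 R) (JB := JtBC R) sg JtBCT h.
  by rewrite /Ntmat cmxN scalerN opprK addrAC.
have [t1 d1] := fin2 hN1 hN2.
have [t2 d2] := fin2 hT1 hT2.
by split.
Qed.
End MM.


Unset Implicit Arguments.
Theorem mainTheorem8 (R : rcfType) (g : 'M[R]_(2 + (2 + 2))) :
  isCM3 g -> PPT g -> fully_separable g ->
  [/\ 2 <= \tr (Nmat g), 2 <= \tr (Ntmat g), 0 < \det (Nmat g) & 0 < \det (Ntmat g)].
Proof. exact: main. Qed.
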